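(* Let $\tau\in\mathcal{T}$. Let $\mathbf{k}(\tau)$ be the number of edges of $\tau$ labelled $I'$ and $\mathbf{l}(\tau)$ the number of leaves of $\tau$. Then $\mathbf{l}(\tau)+\mathbf{k}(\tau)$ is odd.
   Context: $\mathcal{T}$ is the smallest set of rooted trees with edges labelled $I$ or $I'$ containing the single-vertex tree $\bullet$ and such that for $\tau_1,\tau_2,\tau_3\in\mathcal{T}$ the tree $I(\tau_1)I(\tau_2)I(\tau_3)$ (a new root joined to the roots of $\tau_1,\tau_2,\tau_3$ by edges labelled $I$) is in $\mathcal{T}$, and for $\tau_1,\tau_2\in\mathcal{T}$ the tree $I(\tau_1)I'(\tau_2)$ (a new root joined to the root of $\tau_1$ by an $I$-edge and to the root of $\tau_2$ by an $I'$-edge) is in $\mathcal{T}$. A leaf is a non-root vertex of degree 1, or the root of the single-vertex tree. *)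

(* Defs.v *)
From Stdlib Require Import Arith List.
Import ListNotations.

Inductive label := LI | LI'.

Inductive rtree : Type :=
  | Node : list (label * rtree) -> rtree.

(* Membership in the class T: the smallest set containing the single-vertex
   tree and closed under I(t1)I(t2)I(t3) and I(t1)I'(t2). *)
Inductive inT : rtree -> Prop :=
  | inT_leaf : inT (Node [])
  | inT_III : forall t1 t2 t3, inT t1 -> inT t2 -> inT t3 ->
      inT (Node [(LI, t1); (LI, t2); (LI, t3)])
  | inT_II' : forall t1 t2, inT t1 -> inT t2 ->
      inT (Node [(LI, t1); (LI', t2)]).

Fixpoint kI' (t : rtree) : nat :=
  match t with
  | Node cs =>
      (fix go (l : list (label * rtree)) : nat :=
         match l with
         | [] => 0
         | (lab, c) :: r =>
             (match lab with LI' => 1 | LI => 0 end) + kI' c + go r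
         end) cs
  end.

(* number of leaves of a subtree hanging below a parent edge: a non-root
   vertex has degree (#children + 1), so it is a leaf iff it has no children *)
Fixpoint nonroot_leaves (t : rtree) : nat :=
  match t with
  | Node cs =>
      (match cs with [] => 1 | _ => 0 end) +
      (fix go (l : list (label * rtree)) : nat :=
         match l with
         | [] => 0
         | (_, c) :: r => nonroot_leaves c + go r
         end) cs
  end.

(* leaves of a rooted tree: non-root vertices of degree 1, plus the root
   if the tree is the single-vertex tree (root degree = #children). *)
Definition leaves (t : rtree) : nat :=
  match t with
  | Node cs =>
      (match cs with [] => 1 | _ => 0 end) +
      (fix go (l : list (label * rtree)) : nat :=
         match l with
         | [] => 0
         | (_, c) :: r => nonroot_leaves c + go r
         end) cs
  end.

(* Main.v *)
Require Import Defs.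
From Stdlib Require Import Arith Lia.

Lemma aux (t : rtree) (ht : inT t) : Nat.odd (nonroot_leaves t + kI' t) = true.
Proof.
  induction ht; simpl; [reflexivity| |];
  repeat match goal with H : Nat.odd _ = true |- _ =>
    apply Nat.odd_spec in H; destruct H end;
  apply Nat.odd_spec; unfold Nat.Odd.
  - rewrite ?Nat.add_0_r in *. exists (x1+x0+x+1). lia.
  - rewrite ?Nat.add_0_r in *. exists (x0+x+1). lia.
Qed.

Theorem lemma3p25 (t : rtree) (ht : inT t) : Nat.odd (leaves t + kI' t) = true.
Proof.
  replace (leaves t) with (nonroot_leaves t) by (destruct t; reflexivity).
  apply aux; exact ht.
Qed.
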